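(* Let $n\ge 1$ and let $\varphi$ be a tame automorphism of $\mathbf{C}[x_1,\dots,x_{n+1}]$. For $q\in\mathbf{C}[x_1,\dots,x_n]$, let $\varphi_q$ be the $\mathbf{C}$-algebra endomorphism of $\mathbf{C}[x_1,\dots,x_n]$ sending $x_i$ ($1\le i\le n$) to the polynomial obtained from $\varphi(x_i)$ by substituting $q$ for $x_{n+1}$. Then there exists $q\in\mathbf{C}[x_1,\dots,x_n]$ such that $\varphi_q$ is injective.
   Context: An automorphism of $\mathbf{C}[x_1,\dots,x_N]$ is elementary if it fixes all variables except one, $x_i$, and maps $x_i$ to $x_i + f(x_1,\dots,x_{i-1},x_{i+1},\dots,x_N)$; it is tame if it is a composition of elementary and linear automorphisms. *)

(* Defs.v *)
From HB Require Import structures.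
From mathcomp Require Import all_boot all_order all_algebra.
From mathcomp Require Import reals.
From mathcomp.real_closed Require Import complex.
From mathcomp Require Import mpoly.
Set Implicit Arguments. Unset Strict Implicit. Unset Printing Implicit Defensive.
Import GRing.Theory.
Local Open Scope ring_scope.

(* Polynomial endomorphisms of K[x_0..x_{N-1}] (over a commutative ring K),
   represented by the N-tuple of images of the variables:
   phi acts on p by  p |-> p.@(phi) = comp_mpoly phi p. *)
Definition endo (K : comRingType) (N : nat) := N.-tuple {mpoly K[N]}.

Definition endo_id (K : comRingType) (N : nat) : endo K N :=
  [tuple 'X_i | i < N].

Definition endo_comp (K : comRingType) (N : nat) (phi psi : endo K N)
  : endo K N := [tuple comp_mpoly phi (tnth psi i) | i < N].

Definition elementary (K : comRingType) (N : nat) (e : endo K N) : Prop :=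
  exists (i : 'I_N) (f : {mpoly K[N]}),
    (forall m, m \in msupp f -> m i = 0%N) /\
    (forall j, tnth e j = if j == i then 'X_i + f else 'X_j).

Definition linear_aut (K : comUnitRingType) (N : nat) (e : endo K N) : Prop :=
  exists A : 'M[K]_N, A \in unitmx /\
    (forall i, tnth e i = \sum_(j < N) A i j *: 'X_j).

Inductive tame (K : comUnitRingType) (N : nat) : endo K N -> Prop :=
  | tame_id : tame (endo_id K N)
  | tame_elem e phi : elementary e -> tame phi -> tame (endo_comp e phi)
  | tame_lin e phi : linear_aut e -> tame phi -> tame (endo_comp e phi).

(* substitution x_i |-> x_i (i < n), x_{n+1} |-> q *)
Definition subst_last (K : comRingType) (n : nat) (q : {mpoly K[n]})
  : n.+1.-tuple {mpoly K[n]} :=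
  [tuple match unlift ord_max j with Some k => 'X_k | None => q end | j < n.+1].

Definition restrict_q (K : comRingType) (n : nat) (phi : endo K n.+1)
  (q : {mpoly K[n]}) : endo K n :=
  [tuple comp_mpoly (subst_last q) (tnth phi (widen_ord (leqnSn n) i)) | i < n].

(* Main.v *)
Require Import Defs.
From HB Require Import structures.
From mathcomp Require Import all_boot all_order all_algebra.
From mathcomp Require Import reals.
From mathcomp.real_closed Require Import complex.
From mathcomp Require Import mpoly.
Set Implicit Arguments. Unset Strict Implicit. Unset Printing Implicit Defensive.
Import GRing.Theory.
Local Open Scope ring_scope.

Section Ext.
Variables (K : comRingType) (n : nat) (S : ringType) (f g : {mpoly K[n]} -> S).
Hypotheses (f0 : f 0 = 0) (fD : {morph f : x y / x + y}) (f1 : f 1 = 1)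
  (fM : {morph f : x y / x * y}) (g0 : g 0 = 0) (gD : {morph g : x y / x + y})
  (g1 : g 1 = 1) (gM : {morph g : x y / x * y})
  (fgC : forall c, f c%:MP = g c%:MP) (fgX : forall i, f 'X_i = g 'X_i).

Lemma mpoly_ext : f =1 g.
Proof.
move=> p; rewrite (mpolyE p) (big_morph f fD f0) (big_morph g gD g0).
apply: eq_bigr => m _; rewrite -!mul_mpolyC fM gM fgC; congr (_ * _).
rewrite mpolyXE_id (big_morph f fM f1) (big_morph g gM g1).
apply: eq_bigr => i _; elim: (m i) => [|k IH]; first by rewrite !expr0 f1 g1.
by rewrite !exprS fM gM IH fgX.
Qed.
End Ext.

Lemma muniX (K : ringType) n (i : 'I_n) :
  muni ('X_(widen_ord (leqnSn n) i) : {mpoly K[n.+1]}) = ('X_i)%:P.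
Proof.
rewrite /muni mmapX mmap1U /=.
case: splitP=> [j eq|j].
  by congr ('X__)%:P; apply/val_inj=> /=; rewrite -eq.
by rewrite ord1 /= addn0 => /eqP /=; rewrite ltn_eqF.
Qed.

Lemma muniXmax (K : ringType) n :
  muni ('X_ord_max : {mpoly K[n.+1]}) = 'X.
Proof.
rewrite /muni mmapX mmap1U /=.
case: splitP=> //; case=> j lt_jn /eqP /=.
by have := lt_jn; rewrite ltn_neqAle eq_sym=> /andP[/negbTE->].
Qed.
Lemma comp_X (K : comRingType) n k (lq : n.-tuple {mpoly K[k]}) i :
  comp_mpoly lq 'X_i = tnth lq i.
Proof. by rewrite comp_mpolyXU -tnth_nth. Qed.

Lemma endo_compE (K : comRingType) N (e psi : endo K N) p :
  comp_mpoly (endo_comp e psi) p = comp_mpoly e (comp_mpoly psi p).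
Proof.
apply: (@mpoly_ext K N _ (comp_mpoly (endo_comp e psi))
  (fun p => comp_mpoly e (comp_mpoly psi p))).
- exact: comp_mpoly0.
- exact: comp_mpolyD.
- exact: comp_mpoly1.
- exact: rmorphM.
- by rewrite !comp_mpoly0.
- by move=> x y; rewrite !comp_mpolyD.
- by rewrite !comp_mpoly1.
- by move=> x y; rewrite !rmorphM.
- by move=> c; rewrite !comp_mpolyC.
- by move=> i; rewrite !comp_X tnth_mktuple.
Qed.

Lemma left_inv_ext (K : comRingType) N (e e' : endo K N) :
  (forall i, comp_mpoly e' (tnth e i) = 'X_i) ->
  forall p, comp_mpoly e' (comp_mpoly e p) = p.
Proof.
move=> H p.
apply: (@mpoly_ext K N _ (fun p => comp_mpoly e' (comp_mpoly e p)) id) => //.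
- by rewrite !comp_mpoly0.
- by move=> x y; rewrite !comp_mpolyD.
- by rewrite !comp_mpoly1.
- by move=> x y; rewrite !rmorphM.
- by move=> c; rewrite !comp_mpolyC.
- by move=> i; rewrite comp_X H.
Qed.

Lemma nofree (K : comRingType) N (t : endo K N) (i : 'I_N) (f : {mpoly K[N]}) :
  (forall m, m \in msupp f -> m i = 0%N) ->
  (forall j, j != i -> tnth t j = 'X_j) -> comp_mpoly t f = f.
Proof.
move=> Hf Ht; rewrite comp_mpolyE [RHS]mpolyE.
apply: eq_big_seq => m Hm; congr (_ *: _); rewrite mpolyXE_id.
apply: eq_bigr => j _; case: (eqVneq j i) => [->|/Ht ->] //.
by rewrite Hf.
Qed.

Lemma inv_elem (K : comRingType) N (e : endo K N) : elementary e ->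
  exists e' : endo K N, forall p, comp_mpoly e' (comp_mpoly e p) = p.
Proof.
move=> [i [f [Hf He]]].
exists [tuple if j == i then 'X_i - f else 'X_j | j < N].
apply: left_inv_ext => j; rewrite He.
case: (eqVneq j i) => [->|nji]; last by rewrite comp_X tnth_mktuple (negbTE nji).
have Hnf : comp_mpoly [tuple if j == i then 'X_i - f else 'X_j | j < N] f = f.
  apply: (@nofree K N _ i f Hf) => l nli; by rewrite tnth_mktuple (negbTE nli).
by rewrite comp_mpolyD Hnf comp_X tnth_mktuple eqxx subrK.
Qed.

Lemma inv_lin (K : comUnitRingType) N (e : endo K N) : linear_aut e ->
  exists e' : endo K N, forall p, comp_mpoly e' (comp_mpoly e p) = p.
Proof.
move=> [A [HA He]].
exists [tuple \sum_(j < N) invmx A i j *: 'X_j | i < N].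
apply: left_inv_ext => i; rewrite He linear_sum /=.
under eq_bigr => j _ do rewrite comp_mpolyZ comp_X tnth_mktuple scaler_sumr.
rewrite exchange_big /=.
under eq_bigr => k _ do under eq_bigr => j _ do rewrite scalerA.
under eq_bigr => k _ do rewrite -scaler_suml.
rewrite (eq_bigr (fun k => (A *m invmx A) i k *: 'X_k)); last first.
  by move=> k _; rewrite mxE.
rewrite mulmxV // (bigD1 i) //= big1 ?addr0; first by rewrite mxE eqxx scale1r.
by move=> k nki; rewrite mxE eq_sym (negbTE nki) scale0r.
Qed.

Lemma tame_inv (K : comUnitRingType) N (phi : endo K N) : tame phi ->
  exists psi : endo K N, forall p, comp_mpoly psi (comp_mpoly phi p) = p.
Proof.
elim=> [|e ph He _ [psi Hpsi]|e ph He _ [psi Hpsi]].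
- by exists (endo_id K N) => p; rewrite !comp_mpoly_id.
- have [e' He'] := inv_elem He.
  exists (endo_comp psi e') => p; by rewrite !endo_compE He' Hpsi.
- have [e' He'] := inv_lin He.
  exists (endo_comp psi e') => p; by rewrite !endo_compE He' Hpsi.
Qed.
Lemma mwidenXi (K : ringType) n (i : 'I_n) :
  mwiden ('X_i : {mpoly K[n]}) = 'X_(widen_ord (leqnSn n) i).
Proof. by rewrite mwidenX mnmwiden1. Qed.

Lemma muni_mwiden (K : comRingType) n (p : {mpoly K[n]}) : muni (mwiden p) = p%:P.
Proof.
apply: (@mpoly_ext K n _ (fun p => muni (mwiden p)) (fun p => p%:P)).
- by rewrite mwiden0 muni0.
- by move=> x y; rewrite mwidenD muniD.
- by rewrite mwiden1 muni1.
- by move=> x y; rewrite mwidenM muniM.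
- exact: polyC0.
- exact: polyCD.
- exact: polyC1.
- exact: polyCM.
- by move=> c; rewrite mwidenC muniC.
- by move=> i; rewrite mwidenXi muniX.
Qed.

Lemma lift_widen n (k : 'I_n) : lift ord_max k = widen_ord (leqnSn n) k.
Proof. by apply: val_inj; rewrite /= /bump leqNgt ltn_ord. Qed.

Section Main.
Variables (K : idomainType) (n : nat) (q : {mpoly K[n]}).
Let d : {mpoly K[n.+1]} := 'X_ord_max - mwiden q.
Let G (Q : {mpoly K[n.+1]}) := mwiden (comp_mpoly (subst_last q) Q).
Let P (Q : {mpoly K[n.+1]}) := exists r, Q - G Q = d * r.

Lemma P_add a b : P a -> P b -> P (a + b).
Proof.
move=> [ra Ha] [rb Hb]; exists (ra + rb).
by rewrite /G comp_mpolyD mwidenD mulrDr -Ha -Hb opprD addrACA.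
Qed.

Lemma P_mul a b : P a -> P b -> P (a * b).
Proof.
move=> [ra Ha] [rb Hb]; exists (ra * b + G a * rb).
have -> : G (a * b) = G a * G b by rewrite /G rmorphM mwidenM.
have E : a * b - G a * G b = (a - G a) * b + G a * (b - G b).
  by rewrite mulrBl mulrBr addrA subrK.
by rewrite E Ha Hb mulrDr mulrA mulrCA.
Qed.

Lemma P_C c : P c%:MP.
Proof. by exists 0; rewrite /G comp_mpolyC mwidenC subrr mulr0. Qed.

Lemma P_X j : P 'X_j.
Proof.
rewrite /P /G comp_X tnth_mktuple.
case: unliftP => [k ->|->].
  by exists 0; rewrite mwidenXi lift_widen subrr mulr0.
by exists 1; rewrite mulr1.
Qed.

Lemma P_0 : P 0.
Proof. by exists 0; rewrite /G comp_mpoly0 mwiden0 subr0 mulr0. Qed.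

Lemma P_1 : P 1.
Proof. by exists 0; rewrite /G comp_mpoly1 mwiden1 subrr mulr0. Qed.

Lemma P_all Q : P Q.
Proof.
rewrite [Q]mpolyE; apply: big_ind; [exact: P_0|exact: P_add|].
move=> m _; rewrite -mul_mpolyC; apply: P_mul; first exact: P_C.
rewrite mpolyXE_id; apply: big_ind; [exact: P_1|exact: P_mul|].
move=> j _; elim: (m j) => [|k IHk]; first by rewrite expr0; apply: P_1.
by rewrite exprS; apply: P_mul; [exact: P_X | exact: IHk].
Qed.
End Main.
Lemma main_gen (K : idomainType) (n : nat) (phi : endo K n.+1) (hphi : tame phi) :
  exists q : {mpoly K[n]},
    injective (fun p : {mpoly K[n]} => comp_mpoly (restrict_q phi q) p).
Proof.
have [psi Hpsi] := tame_inv hphi.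
have F1 : forall q p, comp_mpoly (restrict_q phi q) p
    = comp_mpoly (subst_last q) (comp_mpoly phi (mwiden p)).
  move=> q; apply: (@mpoly_ext K n _ (comp_mpoly (restrict_q phi q))
    (fun p => comp_mpoly (subst_last q) (comp_mpoly phi (mwiden p)))).
  - exact: comp_mpoly0.
  - exact: comp_mpolyD.
  - exact: comp_mpoly1.
  - exact: rmorphM.
  - by rewrite mwiden0 !comp_mpoly0.
  - by move=> x y; rewrite mwidenD !comp_mpolyD.
  - by rewrite mwiden1 !comp_mpoly1.
  - by move=> x y; rewrite mwidenM !rmorphM.
  - by move=> c; rewrite mwidenC !comp_mpolyC.
  - by move=> i; rewrite mwidenXi !comp_X tnth_mktuple.
have Hex : exists j, (1 < size (muni (tnth psi j)))%N.
  case: (boolP [exists j, (1 < size (muni (tnth psi j)))%N]) => [/existsP//|].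
  rewrite negb_exists => /forallP H.
  pose a := [tuple (muni (tnth psi j))`_0 | j < n.+1].
  have E : forall Q, muni (comp_mpoly psi Q) = (comp_mpoly a Q)%:P.
    apply: (@mpoly_ext K n.+1 _ (fun Q => muni (comp_mpoly psi Q))
      (fun Q => (comp_mpoly a Q)%:P)).
    - by rewrite comp_mpoly0 muni0.
    - by move=> x y; rewrite comp_mpolyD muniD.
    - by rewrite comp_mpoly1 muni1.
    - by move=> x y; rewrite rmorphM muniM.
    - by rewrite comp_mpoly0 polyC0.
    - by move=> x y; rewrite comp_mpolyD polyCD.
    - by rewrite comp_mpoly1 polyC1.
    - by move=> x y; rewrite rmorphM polyCM.
    - by move=> c; rewrite !comp_mpolyC muniC.
    - move=> j; rewrite !comp_X tnth_mktuple; apply: size1_polyC.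
      by have := H j; rewrite -leqNgt.
  have := E (comp_mpoly phi 'X_ord_max); rewrite Hpsi muniXmax => E2.
  have := congr1 (fun x : {poly {mpoly K[n]}} => size x) E2.
  rewrite /= size_polyX => H2.
  by have := size_polyC_leq1 (comp_mpoly a (comp_mpoly phi 'X_ord_max)); rewrite -H2.
pose h (q : {mpoly K[n]}) : {mpoly K[n.+1]} := comp_mpoly psi ('X_ord_max - mwiden q).
have [q Hq] : exists q, (1 < size (muni (h q)))%N.
  have Hc : (1 < size (muni (tnth psi ord_max)))%N \/ (size (muni (tnth psi ord_max)) <= 1)%N.
    by case: (ltnP 1%N (size (muni (tnth psi ord_max)))); [left|right].
  case: Hc => Hmax.
    by exists 0; rewrite /h mwiden0 subr0 comp_X.
  have [j Hj] := Hex.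
  case: (unliftP ord_max j) => [k Ejk|Ej]; last first.
    by exfalso; move: Hj; rewrite Ej ltnNge Hmax.
  exists 'X_k; rewrite /h mwidenXi -lift_widen -Ejk comp_mpolyB !comp_X muniB.
  rewrite addrC size_polyDl size_polyN //.
  exact: leq_ltn_trans Hmax Hj.
exists q => p1 p2 /= E.
apply/eqP; rewrite -subr_eq0; apply/eqP.
have E0 : comp_mpoly (restrict_q phi q) (p1 - p2) = 0 by rewrite comp_mpolyB E subrr.
move: E0; set p := p1 - p2; rewrite F1 => E0.
have [r Hr] := P_all q (comp_mpoly phi (mwiden p)).
rewrite E0 mwiden0 subr0 in Hr.
have := congr1 (fun x => muni (comp_mpoly psi x)) Hr.
rewrite /= Hpsi rmorphM muniM muni_mwiden -/(h q) => Hm.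
case: (eqVneq (muni (comp_mpoly psi r)) 0) => [H0|Hn0].
  by move: Hm; rewrite H0 mulr0 => /eqP; rewrite polyC_eq0 => /eqP.
have hn0 : muni (h q) != 0.
  by rewrite -size_poly_eq0; move: Hq; case: (size _).
exfalso; have Hle := size_polyC_leq1 p; rewrite Hm (size_mul hn0 Hn0) in Hle.
have Hb : (0 < size (muni (comp_mpoly psi r)))%N by rewrite size_poly_gt0.
have Ha : (size (muni (h q)) <= (size (muni (h q)) + size (muni (comp_mpoly psi r))).-1)%N.
  by rewrite -subn1 -addnBA // leq_addr.
by have := leq_trans (leq_ltn_trans (leqnn 1%N) Hq) (leq_trans Ha Hle).
Qed.


Theorem proposition2p4p1 (R : realType) (n : nat) (hn : (0 < n)%N)
  (phi : endo (complex R) n.+1) (hphi : tame phi) :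
  exists q : {mpoly (complex R)[n]},
    injective (fun p : {mpoly (complex R)[n]} => comp_mpoly (restrict_q phi q) p).
Proof. exact: main_gen hphi. Qed.
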